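(* Let $\varepsilon>0$, $r\ge 3$, and let $G$ be an $\varepsilon$-ultra maximal $K_r$-free graph. Then $\tau^*(\mathcal{B}(G))\le C(\varepsilon,r)$ for a constant $C(\varepsilon,r)$ depending only on $\varepsilon$ and $r$.
   Context: An $n$-vertex graph $G$ is $\varepsilon$-ultra maximal $K_r$-free if it is $K_r$-free and for every pair of non-adjacent vertices $u,v$, $G[N(u)\cap N(v)]$ contains at least $\varepsilon n^{r-2}$ copies of $K_{r-2}$. $\mathcal{B}(G)=\{K_v: v\in V(G)\}$ with $K_v=\{I\in\mathrm{MIS}(G): v\in I\}$, a set system on the ground set $\mathrm{MIS}(G)$ of maximal independent sets of $G$. The fractional transversal number $\tau^*(\mathcal{F})$ is the minimum of $\sum_{x}f(x)$ over functions $f$ from the ground set to $[0,1]$ with $\sum_{x\in A}f(x)\ge 1$ for every $A\in\mathcal{F}$. *)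

(* Defs.v *)
From HB Require Import structures.
From mathcomp Require Import all_boot all_order all_algebra.
From mathcomp Require Import boolp classical_sets reals.
Set Implicit Arguments. Unset Strict Implicit. Unset Printing Implicit Defensive.
Import Order.TTheory GRing.Theory Num.Theory.
Local Open Scope ring_scope.

Section Graphs.
Variable T : finType.
Variable e : rel T.

Definition simple_graph := symmetric e /\ irreflexive e.

Definition nbhd (v : T) : {set T} := [set w | e v w].

Definition is_clique (S : {set T}) : bool :=
  [forall x in S, forall y in S, (x != y) ==> e x y].

Definition is_independent (S : {set T}) : bool :=
  [forall x in S, forall y in S, ~~ e x y].

Definition Kr_free (r : nat) : Prop :=
  ~ exists S : {set T}, #|S| = r /\ is_clique S.

Definition num_cliques_in (k : nat) (U : {set T}) : nat :=
  #|[set S : {set T} | [&& S \subset U, #|S| == k & is_clique S]]|.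

Definition MIS : {set {set T}} := [set I | maxset is_independent I].

Definition Kv (v : T) : {set {set T}} := [set I in MIS | v \in I].

Definition BG : {set {set {set T}}} := [set Kv v | v : T].

End Graphs.

Definition ultra_maximal_Kr_free {R : numDomainType} (T : finType) (e : rel T)
    (eps : R) (r : nat) : Prop :=
  Kr_free e r /\
  forall u v : T, u != v -> ~~ e u v ->
    eps * (#|T|%:R) ^+ (r - 2) <= (num_cliques_in e (r - 2) (nbhd e u :&: nbhd e v))%:R.

Definition frac_transversal_number {R : realType} (U : finType) (X : {set U})
    (F : {set {set U}}) : R :=
  inf [set s : R | exists f : U -> R,
         (forall x, x \in X -> 0 <= f x <= 1) /\
         (forall A, A \in F -> 1 <= \sum_(x in A) f x) /\
         s = \sum_(x in X) f x].

(* Main.v *)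
Require Import Defs.
From HB Require Import structures.
From mathcomp Require Import all_boot all_order all_algebra.
From mathcomp Require Import boolp classical_sets reals.
From mathcomp Require Import zify.
Set Implicit Arguments. Unset Strict Implicit. Unset Printing Implicit Defensive.
Import Order.TTheory GRing.Theory Num.Theory.
Local Open Scope ring_scope.

Lemma ffact_le_exp n m : (n ^_ m <= n ^ m)%N.
Proof.
elim: m n => [|m IH] n; first by rewrite ffactn0 expn0.
rewrite ffactnS expnS leq_mul2l; apply/orP; right.
apply: leq_trans (IH n.-1) _; case: m {IH} => [|m]; first by rewrite !expn0.
by rewrite leq_exp2r // leq_pred.
Qed.

Lemma bin_le_exp n m : ('C(n, m) <= n ^ m)%N.
Proof.
apply: leq_trans (ffact_le_exp n m); by rewrite -bin_ffact leq_pmulr // fact_gt0.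
Qed.

Lemma subset_card_exists (T : finType) (k : nat) (A : {set T}) :
  (k <= #|A|)%N -> exists B : {set T}, B \subset A /\ #|B| = k.
Proof.
move: {2}#|A| (erefl #|A|) => n; elim: n A => [|n IH] A HA Hk.
  exists finset.set0; split; first exact: finset.sub0set.
  by rewrite cards0; move: Hk; rewrite HA leqn0 => /eqP.
case: (ltnP k n.+1) => Hkn.
  have [x xA] : exists x, x \in A.
    by apply/set0Pn; rewrite -card_gt0 HA.
  have HA' : #|A :\ x| = n by rewrite (cardsD1 x A) xA in HA; case: HA.
  have [B [BA cB]] := IH (A :\ x) HA' ltac:(by rewrite HA').
  exists B; split => //; exact: (fintype.subset_trans BA (finset.subsetDl _ _)).
exists A; split; first exact: subxx.
by apply/eqP; rewrite eqn_leq Hk HA Hkn.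
Qed.

Definition ext (T : finType) (e : rel T) (S : {set T}) : {set T} :=
  odflt finset.set0 [pick I in MIS e | S \subset I].

Lemma ext_spec (T : finType) (e : rel T) (S : {set T}) :
  is_independent e S -> ext e S \in MIS e /\ S \subset ext e S.
Proof.
move=> HS; rewrite /ext; case: pickP => [I /andP[HI HSI] | H] /=; first by [].
have [I HI HSI] := maxset_exists HS.
by move: (H I); rewrite inE HI HSI.
Qed.

Definition IK (T : finType) (e : rel T) (K : {set T}) : {set T} :=
  [set x | K \subset nbhd e x].

Lemma IK_indep (T : finType) (e : rel T) (r : nat) (K : {set T}) :
  simple_graph e -> Kr_free e r -> (2 <= r)%N -> #|K| = (r - 2)%N ->
  is_clique e K -> is_independent e (IK e K).
Proof.
move=> [sym irr] Hfree Hr cK clK.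
apply/forallP => x; apply/implyP => xI; apply/forallP => y; apply/implyP => yI.
apply/negP => exy; apply: Hfree.
have hxK : forall k, k \in K -> e x k.
  by move=> k kK; move: xI; rewrite inE => /fintype.subsetP/(_ k kK); rewrite inE.
have hyK : forall k, k \in K -> e y k.
  by move=> k kK; move: yI; rewrite inE => /fintype.subsetP/(_ k kK); rewrite inE.
have xK : x \notin K by apply/negP => /hxK; rewrite irr.
have yK : y \notin K by apply/negP => /hyK; rewrite irr.
have xy : x != y by apply/eqP => exy'; move: exy; rewrite exy' irr.
have hK : forall a b, a \in K -> b \in K -> a != b -> e a b.
  by move=> a b aK bK ab; move: clK => /forallP/(_ a)/implyP/(_ aK)/forallP/(_ b)/implyP/(_ bK)/implyP/(_ ab).
exists (x |: (y |: K)); split.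
  rewrite !cardsU1 !inE negb_or xy (negbTE xK) yK /= cK; lia.
apply/forallP => a; apply/implyP => aS; apply/forallP => b; apply/implyP => bS; apply/implyP => ab.
rewrite !inE in aS bS; move: ab.
case/orP: aS => [/eqP->|/orP[/eqP->|aK]]; case/orP: bS => [/eqP->|/orP[/eqP->|bK]];
  rewrite ?eqxx // => ab.
all: first [ exact: hxK | exact: hyK | by rewrite sym | by rewrite sym; apply: hxK | by rewrite sym; apply: hyK | exact: hK ].
Qed.

Definition cap {R : realType} (x : R) : R := if 1 <= x then 1 else x.

Lemma sum_sub {R : realType} (U : finType) (A B : {set U}) (h : U -> R) :
  A \subset B -> (forall x, 0 <= h x) -> \sum_(x in A) h x <= \sum_(x in B) h x.
Proof.
move=> AB h0; rewrite [X in X <= _]big_mkcond [X in _ <= X]big_mkcond /=.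
apply: ler_sum => x _; case: ifP => xA; first by rewrite (fintype.subsetP AB x xA).
by case: ifP.
Qed.

Lemma sum_subT {R : realType} (U : finType) (A : {set U}) (h : U -> R) :
  (forall x, 0 <= h x) -> \sum_(x in A) h x <= \sum_x h x.
Proof.
move=> h0; rewrite [X in X <= _]big_mkcond /=.
by apply: ler_sum => x _; case: ifP.
Qed.

Lemma sum_eq1 {R : realType} (U : finType) (A : {set U}) (a : U) :
  a \in A -> \sum_(I in A) ((a == I)%:R : R) = 1.
Proof.
move=> aA; rewrite (bigD1 a) //= eqxx big1 ?addr0 // => I /andP[_].
by rewrite eq_sym => /negbTE ->.
Qed.

Lemma sum_eq1T {R : realType} (U : finType) (a : U) :
  \sum_I ((a == I)%:R : R) = 1.
Proof.
rewrite (bigD1 a) //= eqxx big1 ?addr0 // => I.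
by rewrite eq_sym => /negbTE ->.
Qed.

Lemma cap_sum {R : realType} (U : finType) (A : {set U}) (g : U -> R) :
  (forall x, 0 <= g x) -> 1 <= \sum_(x in A) g x -> 1 <= \sum_(x in A) cap (g x).
Proof.
move=> g0 H1.
have c0 : forall x, 0 <= cap (g x) by move=> x; rewrite /cap; case: ifP.
case: (boolP [exists x in A, 1 <= g x]).
  case/existsP => x /andP[xA gx].
  rewrite (bigD1 x) //= {1}/cap gx lerDl; exact: sumr_ge0.
rewrite negb_exists => /forallP H.
rewrite (eq_bigr g) // => x xA; move: (H x); rewrite xA /= /cap => /negbTE -> //.
Qed.

Unset Implicit Arguments.
Theorem lemma2p18 (R : realType) (eps : R) (r : nat) :
  0 < eps -> (3 <= r)%N ->
  exists C : R,
    forall (T : finType) (e : rel T),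
      simple_graph e ->
      ultra_maximal_Kr_free e eps r ->
      frac_transversal_number (MIS e) (BG e) <= C.
Proof.
move=> eps_gt0 r3.
exists (eps^-1 + r%:R) => T e Hsg [Hfree Hum].
have [sym irr] := Hsg.
set n := #|T|.
set N : R := n%:R ^+ (r - 2).
set c : R := (eps * N)^-1.
pose Cl := [set K : {set T} | (#|K| == (r - 2)%N) && is_clique e K].
pose U := [set x : T | [forall y, (y != x) ==> e x y]].
pose g := fun I : {set T} =>
  c * \sum_(K in Cl) ((ext e (IK e K) == I)%:R : R)
  + \sum_(x in U) ((ext e [set x] == I)%:R : R).
pose f := fun I => cap (g I).
have N_ge0 : 0 <= N by rewrite /N exprn_ge0.
have c_ge0 : 0 <= c by rewrite /c invr_ge0 mulr_ge0 // ltW.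
have g_ge0 : forall I, 0 <= g I.
  move=> I; rewrite /g addr_ge0 ?mulr_ge0 //; apply: sumr_ge0 => ? _; exact: ler0n.
have f_ge0 : forall I, 0 <= f I by move=> I; rewrite /f /cap; case: ifP.
have f_le1 : forall I, f I <= 1.
  by move=> I; rewrite /f /cap; case: ifP => // /negbT; rewrite -ltNge => /ltW.
have f_le_g : forall I, f I <= g I by move=> I; rewrite /f /cap; case: ifP.
rewrite /frac_transversal_number; set E := (X in inf X).
have Hmem : E (\sum_(I in MIS e) f I).

  exists f; split; first by move=> x _; rewrite f_ge0 f_le1.
  split=> //.
  move=> A /imsetP [v _ ->].
  case: (boolP [exists u, (u != v) && ~~ e v u]).
  - case/existsP => u /andP [uv nevu].
    have := Hum v u; rewrite eq_sym uv => /(_ isT nevu) Hq.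
    apply: cap_sum => //.
    pose Q := [set S : {set T} | [&& S \subset nbhd e v :&: nbhd e u,
                 #|S| == (r - 2)%N & is_clique e S]].
    have QCl : Q \subset Cl.
      apply/fintype.subsetP => S; rewrite !inE => /and3P [_ -> ->] //.
    have Qin : forall K, K \in Q -> ext e (IK e K) \in Kv e v.
      move=> K; rewrite inE => /and3P [Ksub /eqP cK clK].
      have [H1 H2] := ext_spec (IK_indep Hsg Hfree (ltnW r3) cK clK).
      rewrite inE H1 /=; apply: (fintype.subsetP H2); rewrite inE.
      apply/fintype.subsetP => k kK; move: (fintype.subsetP Ksub k kK).
      by rewrite !inE => /andP[].
    have n_gt0 : (0 < n)%N by apply/card_gt0P; exists v.
    have epsN : 0 < eps * N by rewrite mulr_gt0 // /N exprn_gt0 // ltr0n.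
    have Hg : \sum_(I in Kv e v) (c * \sum_(K in Cl) ((ext e (IK e K) == I)%:R : R))
              <= \sum_(I in Kv e v) g I.
      apply: ler_sum => I _; rewrite /g lerDl; apply: sumr_ge0 => ? _; exact: ler0n.
    apply: le_trans Hg.
    rewrite -mulr_sumr exchange_big /=.
    have Hs := ler_wpM2l c_ge0 (sum_sub (h := fun K => \sum_(i in Kv e v) ((ext e (IK e K) == i)%:R : R)) QCl
       (fun K => sumr_ge0 _ (fun i _ => ler0n _ _))).
    apply: le_trans Hs.
    rewrite (eq_bigr (fun _ => 1)); last by move=> K KQ; apply: sum_eq1; apply: Qin.
    rewrite sumr_const /c mulrC -[X in _ <= X]/(_ / (eps * N)) ler_pdivlMr // mul1r.
    exact: Hq.
  - rewrite negb_exists => /forallP Hall.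
    have vU : v \in U.
      rewrite inE; apply/forallP => y; apply/implyP => yv.
      by move: (Hall y); rewrite yv /= negbK.
    have Hind : is_independent e [set v].
      apply/forallP => x; apply/implyP; rewrite inE => /eqP ->.
      apply/forallP => y; apply/implyP; rewrite inE => /eqP ->.
      by rewrite irr.
    have [H1 H2] := ext_spec Hind.
    have HK : ext e [set v] \in Kv e v.
      by rewrite inE H1 /=; apply: (fintype.subsetP H2); rewrite inE.
    rewrite (bigD1 _ HK) /=.
    have Hg1 : 1 <= g (ext e [set v]).
      rewrite /g; apply: le_trans (_ : _ <= \sum_(x in U) ((ext e [set x] == ext e [set v])%:R : R)) _.
        rewrite (bigD1 v) //= eqxx lerDl; apply: sumr_ge0 => ? _; exact: ler0n.
      rewrite lerDr mulr_ge0 //; apply: sumr_ge0 => ? _; exact: ler0n.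
    have Hf1 : 1 <= f (ext e [set v]) by rewrite /f /cap Hg1.
    apply: le_trans Hf1 _; rewrite lerDl; apply: sumr_ge0 => I _; exact: f_ge0.
have Hlb : has_lbound E.
  exists 0 => y [f0 [H0 [_ ->]]]; apply: sumr_ge0 => I IM.
  by case/andP: (H0 I IM).
apply: le_trans (ge_inf Hlb Hmem) _.
apply: le_trans (ler_sum _ (fun I _ => f_le_g I)) _.
apply: le_trans (@sum_subT R _ (MIS e) g g_ge0) _.
have E1 : \sum_I \sum_(K in Cl) ((ext e (IK e K) == I)%:R : R) = #|Cl|%:R.
  rewrite exchange_big /= (eq_bigr (fun _ => 1)) ?sumr_const // => K _; exact: sum_eq1T.
have E2 : \sum_I \sum_(x in U) ((ext e [set x] == I)%:R : R) = #|U|%:R.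
  rewrite exchange_big /= (eq_bigr (fun _ => 1)) ?sumr_const // => K _; exact: sum_eq1T.
rewrite /g big_split /= -mulr_sumr E1 E2.
apply: lerD.
  have hCl : (#|Cl| <= n ^ (r - 2))%N.
    apply: leq_trans (subset_leq_card (_ : Cl \subset [set K : {set T} | #|K| == (r - 2)%N])) _.
      by apply/fintype.subsetP => K; rewrite !inE => /andP[].
    by rewrite card_draws; exact: bin_le_exp.
  case: (posnP n) => [n0|n_gt0].
    have r2 : (r - 2 == 0)%N = false by apply/negbTE; rewrite subn_eq0 -ltnNge.
    have -> : c = 0 by rewrite /c /N n0 expr0n r2 mulr0 invr0.
    by rewrite mul0r invr_ge0 ltW.
  have N0 : N != 0 by rewrite /N expf_neq0 // pnatr_eq0 -lt0n.
  have -> : eps^-1 = c * N by rewrite /c invfM -mulrA mulVf ?mulr1.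
  by rewrite ler_wpM2l // /N -natrX ler_nat.
rewrite ler_nat; case: (leqP #|U| r) => // hlt; exfalso.
have [B [BU cB]] := subset_card_exists (ltnW hlt).
apply: Hfree; exists B; split => //.
apply/forallP => a; apply/implyP => aB; apply/forallP => b; apply/implyP => bB; apply/implyP => ab.
move: (fintype.subsetP BU a aB); rewrite inE => /forallP/(_ b)/implyP; apply.
by rewrite eq_sym.
Qed.
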